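(* Let $u\in\mathcal{B}^N$, $m\in\mathbb{R}$, $\varepsilon>0$, $(r,\sigma)\in F(N,A,u,m)$ and $(t,\sigma)\in F(N,A,u,m-\varepsilon)$ such that $r_a>t_a$ for each $a\in A$. Suppose there is no $i\in N$ and $a\in A$ with $r_a>b_i>t_a$. Then $\sigma$ is a maximum weight perfect matching in $\mathcal{F}^u(r)$.
   Context: Fix a finite set $\{\rho_1,\dots,\rho_k\}\subseteq\mathbb{R}_+$ with $\rho_1=0$. $N=\{1,\dots,n\}$ agents, $A$ a set of $n$ rooms. $\mathcal{B}$ is the set of utility functions $u_i(r_a,a)=v^i_a-r_a-\rho_i\max\{0,r_a-b_i\}$ with $v^i\in\mathbb{R}^A$, $b_i\ge0$, $\rho_i\in\{\rho_1,\dots,\rho_k\}$. An allocation for $(N,A,u,m)$ is $(r,\sigma)$ with $\sigma:N\to A$ a bijection, $r\in\mathbb{R}^A$, $\sum_ar_a=m$; envy-free means $u_i(r_{\sigma(i)},\sigma(i))\ge u_i(r_{\sigma(j)},\sigma(j))$ for all $i,j$; $F(N,A,u,m)$ is the set of envy-free allocations. $\lambda_{ia}(u,r):=1+\rho_i$ if $r_a>b_i$, else $1$. For $r$ with some envy-free $(r,\sigma)$, $\mathcal{F}(r)$ is the bipartite graph on $N\cup A$ with edge $(i,a)$ iff $u_i(r_{\sigma(i)},\sigma(i))=u_i(r_a,a)$, and $\mathcal{F}^u(r)$ is this graph with weights $w(i,a)=\log\lambda_{ia}(u,r)$; a maximum weight perfect matching is a bijection $\mu:N\to A$ using only edges of $\mathcal{F}(r)$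 and maximizing $\sum_iw(i,\mu(i))$ among such. *)

(* Defs.v *)
From mathcomp Require Import all_boot all_order all_algebra.
From mathcomp Require Import reals exp.
Set Implicit Arguments. Unset Strict Implicit. Unset Printing Implicit Defensive.
Import Order.TTheory GRing.Theory Num.Theory.
Local Open Scope ring_scope.

Section Defs.
Variable R : realType.

(* Agents N = {1..n} are 'I_n; rooms are a finite type A with #|A| = n.
   A utility profile in B^N is given by, for each agent i,
   values v i : A -> R, budget b i, penalty rate rho i. *)
Record profile (n : nat) (A : finType) := Profile {
  val_ : 'I_n -> A -> R;
  bud_ : 'I_n -> R;
  rho_ : 'I_n -> R }.

Definition rho_set_ok (rhos : seq R) : Prop :=
  head 1 rhos = 0 /\ all (fun x => 0 <= x) rhos.

Definition in_B (rhos : seq R) n A (u : profile n A) : Prop :=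
  forall i, 0 <= bud_ u i /\ rho_ u i \in rhos.

Definition util n (A : finType) (u : profile n A) (i : 'I_n) (x : R) (a : A) : R :=
  val_ u i a - x - rho_ u i * Num.max 0 (x - bud_ u i).

Definition allocation n (A : finType) (m : R) (r : A -> R) (sigma : 'I_n -> A) : Prop :=
  bijective sigma /\ \sum_(a : A) r a = m.

Definition envy_free n (A : finType) (u : profile n A) (r : A -> R) (sigma : 'I_n -> A) :=
  forall i j : 'I_n, util u i (r (sigma j)) (sigma j) <= util u i (r (sigma i)) (sigma i).

Definition in_F n A (u : profile n A) (m : R) (r : A -> R) (sigma : 'I_n -> A) :=
  allocation m r sigma /\ envy_free u r sigma.

Definition lambda n (A : finType) (u : profile n A) (r : A -> R) (i : 'I_n) (a : A) : R :=
  if r a > bud_ u i then 1 + rho_ u i else 1.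

Definition Fedge n A (u : profile n A) (r : A -> R) (sigma : 'I_n -> A)
  (i : 'I_n) (a : A) : Prop :=
  util u i (r (sigma i)) (sigma i) = util u i (r a) a.

Definition weight n (A : finType) (u : profile n A) (r : A -> R) (i : 'I_n) (a : A) : R :=
  ln (lambda u r i a).

Definition perfect_matching n (A : finType) (u : profile n A) (r : A -> R) (sigma : 'I_n -> A)
  (mu : 'I_n -> A) : Prop :=
  bijective mu /\ forall i, Fedge u r sigma i (mu i).

Definition max_weight_pm n (A : finType) (u : profile n A) (r : A -> R) (sigma : 'I_n -> A)
  (mu : 'I_n -> A) : Prop :=
  perfect_matching u r sigma mu /\
  forall mu', perfect_matching u r sigma mu' ->
    \sum_(i < n) weight u r i (mu' i) <= \sum_(i < n) weight u r i (mu i).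

End Defs.

(* Main.v *)
Require Import Defs.
From mathcomp Require Import all_boot all_order all_algebra.
From mathcomp Require Import reals exp.
From mathcomp Require Import ring lra.
Import Order.TTheory GRing.Theory Num.Theory.
Local Open Scope ring_scope.

Lemma util_shift (R : realType) n (A : finType) (u : profile R n A) (r t : A -> R) i a :
  t a < r a -> ~ (t a < bud_ u i < r a) ->
  util u i (t a) a = util u i (r a) a + lambda u r i a * (r a - t a).
Proof.
move=> ltr nb; rewrite /util /lambda.
have [hb|hb] := ltrP (bud_ u i) (r a).
- have hbt : bud_ u i <= t a.
    by rewrite leNgt; apply/negP => h; apply: nb; rewrite h hb.
  rewrite !max_r ?subr_ge0 //; last exact: ltW.
  ring.
- have hbt : t a - bud_ u i <= 0 by rewrite subr_le0; exact: le_trans (ltW ltr) hb.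
  have hbr : r a - bud_ u i <= 0 by rewrite subr_le0.
  rewrite !max_l //. ring.
Qed.

Theorem lemma4 (R : realType) (rhos : seq R) (n : nat) (A : finType)
  (u : profile R n A) (m eps : R) (r t : A -> R) (sigma : 'I_n -> A) :
  rho_set_ok rhos ->
  #|A| = n ->
  in_B rhos u ->
  0 < eps ->
  in_F u m r sigma ->
  in_F u (m - eps) t sigma ->
  (forall a : A, t a < r a) ->
  ~ (exists (i : 'I_n) (a : A), t a < bud_ u i < r a) ->
  max_weight_pm u r sigma sigma.
Proof.
move=> [_ rpos] _ inB _ [[bs _] efr] [_ eft] ltr nb.
have lampos : forall i a, 0 < lambda u r i a.
  move=> i a; rewrite /lambda; case: ifP => // _.
  have := (inB i).2 => /(allP rpos) /= h; lra.
have dpos : forall a, 0 < r a - t a by move=> a; rewrite subr_gt0.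
split; first by split => // i; rewrite /Fedge.
move=> mu [bmu emu].
have [sig_inv _ sigK] := bs.
pose d a := ln (r a - t a).
have key : forall i, weight u r i (mu i) + d (mu i) <= weight u r i (sigma i) + d (sigma i).
  move=> i; rewrite /weight /d -!lnM ?posrE ?lampos ?dpos //.
  rewrite ler_ln ?posrE ?mulr_gt0 ?lampos ?dpos //.
  have h := eft i (sig_inv (mu i)).
  rewrite sigK in h.
  have nb' : forall a, ~ (t a < bud_ u i < r a).
    by move=> a hh; apply: nb; exists i, a.
  rewrite (@util_shift _ _ _ u r t i (mu i) (ltr _) (nb' _))
    (@util_shift _ _ _ u r t i (sigma i) (ltr _) (nb' _)) in h.
  move: (emu i); rewrite /Fedge => e; rewrite -e in h; lra.
have S : forall f : 'I_n -> A, bijective f -> \sum_(i < n) d (f i) = \sum_(a : A) d a.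
  by move=> f bf; rewrite (reindex f) //; exact: onW_bij.
have : \sum_(i < n) (weight u r i (mu i) + d (mu i)) <=
        \sum_(i < n) (weight u r i (sigma i) + d (sigma i)).
  by apply: ler_sum => i _; exact: key.
rewrite !big_split /=.
rewrite (S mu bmu) (S sigma bs).
by rewrite lerD2r.
Qed.
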